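(* Let $n\ge 4$. Each of the following representations $\varepsilon_j:UV_n(2)\to\mathrm{GL}_{n+1}(\mathbb{C})$, $1\le j\le 4$, is reducible: $\varepsilon_j(\rho_i)=\mathrm{diag}(I_{i-1},R^{(j)},I_{n-i-1})$, $\varepsilon_j(\sigma_{i,t})=\mathrm{diag}(I_{i-1},S_t^{(j)},I_{n-i-1})$ for $1\le i\le n-1$, $t\in\{1,2\}$, where (1) $R^{(1)}=\begin{pmatrix}1&0&0\\0&0&r_6\\0&\frac1{r_6}&0\end{pmatrix}$, $S_t^{(1)}=\begin{pmatrix}1&0&0\\0&s_{5,t}&s_{6,t}\\0&s_{8,t}&s_{9,t}\end{pmatrix}$, with $r_6\ne0$, $s_{5,t}s_{9,t}-s_{6,t}s_{8,t}\ne0$; (2) $R^{(2)}=\begin{pmatrix}0&r_2&0\\ \frac1{r_2}&0&0\\0&0&1\end{pmatrix}$, $S_t^{(2)}=\begin{pmatrix}s_{1,t}&s_{2,t}&0\\ s_{4,t}&s_{5,t}&0\\0&0&1\end{pmatrix}$, with $r_2\ne0$, $s_{1,t}s_{5,t}-s_{2,t}s_{4,t}\ne0$; (3) $R^{(3)}=\begin{pmatrix}1&0&0\\ \frac1{r_6}&-1&r_6\\0&0&1\end{pmatrix}$, $S_t^{(3)}=\begin{pmatrix}1&0&0\\ s_{4,t}&s_{5,t}&r_6(1-r_6s_{4,t}-s_{5,t})\\0&0&1\end{pmatrix}$, with $r_6\ne0$, $s_{5,t}\ne0$; (4) $R^{(4)}=\begin{pmatrix}1&r_2&0\\0&-1&0\\0&\frac1{r_2}&1\end{pmatrix}$,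 $S_t^{(4)}=\begin{pmatrix}1&r_2(1-s_{5,t}-r_2s_{8,t})&0\\0&s_{5,t}&0\\0&s_{8,t}&1\end{pmatrix}$, with $r_2\ne0$, $s_{5,t}\ne0$. All parameters are complex numbers.
   Context: $UV_n(c)$ is the group with generators $\rho_i$ ($1\le i\le n-1$), $\sigma_{i,t}$ ($1\le i\le n-1$, $1\le t\le c$) and relations $\rho_i\rho_{i+1}\rho_i=\rho_{i+1}\rho_i\rho_{i+1}$, $\rho_i\rho_j=\rho_j\rho_i$ ($|i-j|\ge2$), $\rho_i^2=1$, $\sigma_{i,t}\sigma_{j,\ell}=\sigma_{j,\ell}\sigma_{i,t}$ ($|i-j|\ge2$), $\sigma_{i,t}\rho_j=\rho_j\sigma_{i,t}$ ($|i-j|\ge2$), $\rho_i\rho_{i+1}\sigma_{i,t}=\sigma_{i+1,t}\rho_i\rho_{i+1}$ ($1\le i\le n-2$). The displayed assignments define representations of $UV_n(2)$. $\mathrm{diag}$ denotes a block diagonal matrix, $I_r$ the $r\times r$ identity. Reducible means there is a nonzero proper subspace of $\mathbb{C}^{n+1}$ invariant under all image matrices. *)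

(* Defs.v *)
From HB Require Import structures.
From mathcomp Require Import all_boot all_order all_algebra.
From mathcomp Require Import complex.
From mathcomp Require Import reals.
Set Implicit Arguments. Unset Strict Implicit. Unset Printing Implicit Defensive.
Import Order.TTheory GRing.Theory Num.Theory.
Local Open Scope ring_scope.

Definition mx3 {F : fieldType} (a b c d e f g h k : F) : 'M[F]_3 :=
  \matrix_(x < 3, y < 3)
    nth 0 (nth [::] [:: [:: a; b; c]; [:: d; e; f]; [:: g; h; k]] x) y.

(* diag(I_{i-1}, B, I_{n-i-1}) : an (n+1)x(n+1) matrix, 1 <= i <= n-1;
   block B occupies rows/cols i-1, i, i+1 (0-based). *)
Definition blk {F : fieldType} (n i : nat) (B : 'M[F]_3) : 'M[F]_n.+1 :=
  \matrix_(a, b)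
    if ((i.-1 <= a < i + 2) && (i.-1 <= b < i + 2))%N
    then B (inord (a - i.-1)) (inord (b - i.-1))
    else (a == b)%:R.

(* Images of the generators rho_i, sigma_{i,t} (t in {1,2}, encoded 'I_2). *)
Definition gen_img {F : fieldType} (n : nat) (Rm : 'M[F]_3) (Sm : 'I_2 -> 'M[F]_3)
  (M : 'M[F]_n.+1) : Prop :=
  exists i : nat, (1 <= i <= n - 1)%N /\
    (M = blk n i Rm \/ exists t : 'I_2, M = blk n i (Sm t)).

(* The subgroup of GL generated by a set of (invertible) matrices:
   this is the image of the representation. *)
Inductive gen_group {F : fieldType} (m : nat) (S : 'M[F]_m.+1 -> Prop)
  : 'M[F]_m.+1 -> Prop :=
| gg1 : gen_group S 1%:M
| ggS M : S M -> gen_group S M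
| ggV M : gen_group S M -> gen_group S (invmx M)
| ggM M N : gen_group S M -> gen_group S N -> gen_group S (M *m N).

(* A set G of matrices acting on column vectors F^(m+1) is reducible if there
   is a nonzero proper subspace W invariant under all of them. W is encoded as
   the row space of V (rows = vectors of W, transposed); invariance
   M w \in W for w \in W reads (V *m M^T <= V)%MS. *)
Definition reducible_set {F : fieldType} (m : nat) (G : 'M[F]_m.+1 -> Prop) : Prop :=
  exists V : 'M[F]_m.+1,
    [/\ V != 0, (\rank V < m.+1)%N & forall M, G M -> (V *m M^T <= V)%MS].

Definition reducible_rep {F : fieldType} (n : nat) (Rm : 'M[F]_3)
  (Sm : 'I_2 -> 'M[F]_3) : Prop :=
  reducible_set (gen_group (@gen_img F n Rm Sm)).

Section Mats.
Variable F : fieldType.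
Definition R1 (r6 : F) := mx3 1 0 0  0 0 r6  0 r6^-1 0.
Definition S1 (s5 s6 s8 s9 : F) := mx3 1 0 0  0 s5 s6  0 s8 s9.
Definition R2 (r2 : F) := mx3 0 r2 0  r2^-1 0 0  0 0 1.
Definition S2 (s1 s2 s4 s5 : F) := mx3 s1 s2 0  s4 s5 0  0 0 1.
Definition R3 (r6 : F) := mx3 1 0 0  r6^-1 (-1) r6  0 0 1.
Definition S3 (r6 s4 s5 : F) := mx3 1 0 0  s4 s5 (r6 * (1 - r6 * s4 - s5))  0 0 1.
Definition R4 (r2 : F) := mx3 1 r2 0  0 (-1) 0  0 r2^-1 1.
Definition S4 (r2 s5 s8 : F) := mx3 1 (r2 * (1 - s5 - r2 * s8)) 0  0 s5 0  0 s8 1.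
End Mats.

(* Main.v *)
Require Import Defs.
From HB Require Import structures.
From mathcomp Require Import all_boot all_order all_algebra.
From mathcomp Require Import complex.
From mathcomp Require Import reals.
From mathcomp Require Import zify.
Import Order.TTheory GRing.Theory Num.Theory.
Local Open Scope ring_scope.

Lemma redA (F : fieldType) (m : nat) (S : 'M[F]_m.+1 -> Prop) (v : 'rV[F]_m.+1) :
  (0 < m)%N -> v != 0 -> (forall M, S M -> v *m M^T = v) ->
  reducible_set (gen_group S).
Proof.
move=> m0 v0 HS; exists ((const_mx 1 : 'cV[F]_m.+1) *m v); split.
- apply: contra v0 => /eqP H; apply/eqP/rowP => j.
  have := congr1 (fun A : 'M[F]_m.+1 => A 0 j) H; rewrite /= !mxE big_ord1 /const_mx !mxE mul1r => ->.
  by rewrite ?mxE.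
- by apply: leq_ltn_trans (mxrankM_maxr _ _) _; apply: leq_ltn_trans (rank_leq_row _) _.
- have P : forall M, gen_group S M -> v *m M^T = v.
    move=> M; elim => {M}.
    + by rewrite trmx1 mulmx1.
    + by move=> M /HS.
    + move=> M _ IH; case: (boolP (M \in unitmx)) => Mu.
        by rewrite trmx_inv -{1}IH mulmxK // unitmx_tr.
      by rewrite invmx_out ?inE.
    + by move=> M N _ IHM _ IHN; rewrite trmx_mul mulmxA IHN IHM.
  by move=> M /P H; rewrite -mulmxA H.
Qed.

Lemma redB (F : fieldType) (m : nat) (S : 'M[F]_m.+1 -> Prop) (x : 'rV[F]_m.+1) :
  (0 < m)%N -> x != 0 -> (forall M, S M -> x *m M = x) ->
  reducible_set (gen_group S).
Proof.
move=> m0 x0 HS.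
have rx : \rank x^T = 1%N.
  apply/eqP; rewrite eqn_leq mxrank_tr rank_leq_row lt0n mxrank_eq0 x0 //.
exists (kermx x^T); split.
- by rewrite -mxrank_eq0 mxrank_ker rx subn1 -lt0n.
- by rewrite mxrank_ker rx subn1 ltn_predL.
- have P : forall M, gen_group S M -> x *m M = x.
    move=> M; elim => {M}.
    + by rewrite mulmx1.
    + by move=> M /HS.
    + move=> M _ IH; case: (boolP (M \in unitmx)) => Mu.
        by rewrite -{1}IH mulmxK.
      by rewrite invmx_out ?inE.
    + by move=> M N _ IHM _ IHN; rewrite mulmxA IHM IHN.
  move=> M /P H; rewrite sub_kermx -mulmxA -trmx_mul H mulmx_ker //.
Qed.

Lemma colfix0 (F : fieldType) n i (B : 'M[F]_3) : (1 <= i)%N ->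
  (forall k, (k < 3)%N -> B (inord k) (inord 0) = (k == 0)%:R) ->
  (delta_mx 0 0 : 'rV[F]_n.+1) *m (blk n i B)^T = delta_mx 0 0.
Proof.
move=> i1 HB; rewrite -rowE; apply/rowP => j; rewrite !mxE /=.
case: i i1 => [|[|i]] //= _.
  case: ifP => /= [H|_] //.
  rewrite !subn0 HB //; lia.
by case: ifP => // H; lia.
Qed.

Lemma rowfix0 (F : fieldType) n i (B : 'M[F]_3) : (1 <= i)%N ->
  (forall k, (k < 3)%N -> B (inord 0) (inord k) = (k == 0)%:R) ->
  (delta_mx 0 0 : 'rV[F]_n.+1) *m blk n i B = delta_mx 0 0.
Proof.
move=> i1 HB; rewrite -rowE; apply/rowP => j; rewrite !mxE /=.
case: i i1 => [|[|i]] //= _.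
  case: ifP => /= [H|_] //.
  rewrite !subn0 HB //; lia.
all: by rewrite eq_sym.
Qed.

Lemma colfixN (F : fieldType) n i (B : 'M[F]_3) : (4 <= n)%N -> (1 <= i <= n - 1)%N ->
  (forall k, (k < 3)%N -> B (inord k) (inord 2) = (k == 2)%:R) ->
  (delta_mx 0 ord_max : 'rV[F]_n.+1) *m (blk n i B)^T = delta_mx 0 ord_max.
Proof.
move=> n4 /andP[i1 i2] HB; rewrite -rowE; apply/rowP => j; rewrite !mxE /=.
case: ifP => [/andP[/andP[a b] /andP[c d]] | _] //.
have -> : (n - i.-1 = 2)%N by lia.
rewrite HB; last by lia.
have -> : (j == ord_max) = (j == n :> nat) by [].
by have -> : ((j - i.-1)%N == 2)%N = (j == n :> nat) by apply/eqP/eqP; lia.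
Qed.

Lemma e0_neq0 (F : fieldType) m (k : 'I_m) : (delta_mx 0 k : 'rV[F]_m) != 0.
Proof.
by apply/eqP => /matrixP/(_ 0 k); rewrite !mxE !eqxx /= => /eqP; rewrite oner_eq0.
Qed.

Theorem theorem4p2 (R : realType) (n : nat) : (4 <= n)%N ->
  (forall (r6 : R[i]) (s5 s6 s8 s9 : 'I_2 -> R[i]),
     r6 != 0 -> (forall t, s5 t * s9 t - s6 t * s8 t != 0) ->
     reducible_rep n (R1 r6) (fun t => S1 (s5 t) (s6 t) (s8 t) (s9 t))) /\
  (forall (r2 : R[i]) (s1 s2 s4 s5 : 'I_2 -> R[i]),
     r2 != 0 -> (forall t, s1 t * s5 t - s2 t * s4 t != 0) ->
     reducible_rep n (R2 r2) (fun t => S2 (s1 t) (s2 t) (s4 t) (s5 t))) /\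
  (forall (r6 : R[i]) (s4 s5 : 'I_2 -> R[i]),
     r6 != 0 -> (forall t, s5 t != 0) ->
     reducible_rep n (R3 r6) (fun t => S3 r6 (s4 t) (s5 t))) /\
  (forall (r2 : R[i]) (s5 s8 : 'I_2 -> R[i]),
     r2 != 0 -> (forall t, s5 t != 0) ->
     reducible_rep n (R4 r2) (fun t => S4 r2 (s5 t) (s8 t))).
Proof.
move=> n4; have n0 : (0 < n)%N by lia.
split; [|split; [|split]].
- move=> r6 s5 s6 s8 s9 _ _.
  apply: (@redA _ _ _ (delta_mx 0 0)) => //; first exact: e0_neq0.
  move=> M [i [/andP[i1 _] [->|[t ->]]]]; apply: colfix0 => // -[|[|[|k]]] // _;
    by rewrite /R1 /S1 /mx3 mxE !inordK.
- move=> r2 s1 s2 s4 s5 _ _.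
  apply: (@redA _ _ _ (delta_mx 0 ord_max)) => //; first exact: e0_neq0.
  move=> M [i [ii [->|[t ->]]]]; apply: colfixN => // -[|[|[|k]]] // _;
    by rewrite /R2 /S2 /mx3 mxE !inordK.
- move=> r6 s4 s5 _ _.
  apply: (@redB _ _ _ (delta_mx 0 0)) => //; first exact: e0_neq0.
  move=> M [i [/andP[i1 _] [->|[t ->]]]]; apply: rowfix0 => // -[|[|[|k]]] // _;
    by rewrite /R3 /S3 /mx3 mxE !inordK.
- move=> r2 s5 s8 _ _.
  apply: (@redA _ _ _ (delta_mx 0 0)) => //; first exact: e0_neq0.
  move=> M [i [/andP[i1 _] [->|[t ->]]]]; apply: colfix0 => // -[|[|[|k]]] // _;
    by rewrite /R4 /S4 /mx3 mxE !inordK.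
Qed.
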